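(* Let $q \equiv 1 \pmod{14}$ be a prime power, let $\rho$ be a primitive element of $\mathbb F_q$, let $c \equiv 1 \pmod 4$ be a positive integer, and let $l = (3c+1)/4$. Suppose that $c = c^7_q(1,5)$ (respectively $c = c^7_q(1,3)$) and set $\Gamma = \operatorname{Cay}(G_{l,3,q},S(\pi))$ where $\pi = \Psi_1$ (respectively $\pi=\Psi_2$). Then $\Gamma$ is edge-regular with parameters $(8lq,\ 8l-2+q,\ 8l-2)$ and has a regular clique of order $8l$.
   Context: For an additive group $A$, $A^*=A\setminus\{0\}$. $G_{l,3,q} = \mathbb Z_l\oplus\mathbb Z_2^3\oplus\mathbb F_q$. $S_0=\{(g,0): g\in(\mathbb Z_l\oplus\mathbb Z_2^3)^*\}$; for a bijection $\pi:(\mathbb Z_2^3)^*\to\mathbb Z_7$ and $z\in(\mathbb Z_2^3)^*$, $S_{z,\pi}=\{(0,z,\rho^j): j\in\mathbb Z,\ j\equiv\pi(z)\pmod 7\}$; $S(\pi)=S_0\cup\bigcup_z S_{z,\pi}$; $\operatorname{Cay}(G_{l,3,q},S(\pi))$ has vertex set $G_{l,3,q}$ with $x\sim y$ iff $y-x\in S(\pi)$. Elements of $\mathbb Z_2^3$ are written $(x_2,x_1,x_0)$, $\hat x\in\{0,1\}$ is the integer representative of $x\in\mathbb Z_2$; $\phi(x_2,x_1,x_0)=\hat x_0+2\hat x_1+4\hat x_2\pmod 7$, $\operatorname{wt}(x_2,x_1,x_0)=\hat x_0+\hat x_1+\hat x_2$, $\sigma_+(x_2,x_1,x_0)=(x_1,x_0,x_2)$,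 $\sigma_-(x_2,x_1,x_0)=(x_0,x_2,x_1)$; $\Psi_1(\mathbf x)=\phi(\sigma_+(\mathbf x))$ for odd weight, $\phi(\sigma_-(\mathbf x))$ for even weight; $\Psi_2(\mathbf x)=\phi(\sigma_+(\mathbf x)+\mathbf x)$ for odd weight, $\phi((1,1,1)+\mathbf x)$ for even weight. Write $q=14r+1$; $C^7_q(i)=\{\rho^{7j+i}:0\le j\le 2r-1\}$, $c^7_q(a,b)=|(C^7_q(a)+1)\cap C^7_q(b)|$. A graph is edge-regular with parameters $(N,k,\lambda)$ if it is non-empty, has $N$ vertices, is $k$-regular, and every two adjacent vertices have exactly $\lambda$ common neighbours. A clique $\mathcal C$ is regular if every vertex outside $\mathcal C$ is adjacent to the same number $e>0$ of vertices of $\mathcal C$. *)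

(* Defs.v *)
From HB Require Import structures.
From mathcomp Require Import all_boot all_order all_algebra all_field.
From mathcomp Require Import boolp.
Set Implicit Arguments. Unset Strict Implicit. Unset Printing Implicit Defensive.
Import Order.TTheory GRing.Theory Num.Theory.
Local Open Scope ring_scope.

(* Z_2^3, an element (x2,x1,x0) is written ((x2,x1),x0) *)
Definition Z23 := (bool * bool * bool)%type.
Definition z0 : Z23 := (false, false, false).
Definition add3 (z w : Z23) : Z23 :=
  ((z.1.1 (+) w.1.1, z.1.2 (+) w.1.2), z.2 (+) w.2).

Definition phi (x : Z23) : nat :=
  let: ((x2, x1), x0) := x in ((x0 : nat) + 2 * (x1 : nat) + 4 * (x2 : nat)) %% 7.
Definition wt (x : Z23) : nat :=
  let: ((x2, x1), x0) := x in ((x0 : nat) + (x1 : nat) + (x2 : nat))%N.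
Definition sigp (x : Z23) : Z23 := let: ((x2, x1), x0) := x in ((x1, x0), x2).
Definition sigm (x : Z23) : Z23 := let: ((x2, x1), x0) := x in ((x0, x2), x1).

(* values in Z_7 represented by residues 0..6 *)
Definition Psi1 (x : Z23) : nat :=
  if odd (wt x) then phi (sigp x) else phi (sigm x).
Definition Psi2 (x : Z23) : nat :=
  if odd (wt x) then phi (add3 (sigp x) x) else phi (add3 (true, true, true) x).

Definition vtx (l : nat) (F : finFieldType) := ('I_l * Z23 * F)%type.

(* b - a in Z_l, as a residue in 0..l-1 *)
Definition subZl (l : nat) (a b : 'I_l) : nat := ((b : nat) + (l - a)) %% l.

Definition inS (F : finFieldType) (rho : F) (pi : Z23 -> nat)
    (dl : nat) (dz : Z23) (dF : F) : bool :=
  ((dF == 0) && ~~ ((dl == 0)%N && (dz == z0)))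
  || [&& (dl == 0)%N, dz != z0 &
        `[< exists j : int, (j %% 7)%Z = (pi dz)%:Z /\ dF = rho ^ j >]].

Definition cay_adj (l : nat) (F : finFieldType) (rho : F) (pi : Z23 -> nat)
    (x y : vtx l F) : bool :=
  inS rho pi (subZl x.1.1 y.1.1) (add3 x.1.2 y.1.2) (y.2 - x.2).

(* cyclotomic classes and numbers of order 7, q = 14 r + 1 *)
Definition cclass (F : finFieldType) (rho : F) (i : nat) : {set F} :=
  [set rho ^+ (7 * j + i) | j : 'I_(2 * ((#|F|.-1) %/ 14))].
Definition cycnum (F : finFieldType) (rho : F) (a b : nat) : nat :=
  #|[set x : F | (x - 1 \in cclass rho a) && (x \in cclass rho b)]|.

Definition edge_regular (T : finType) (adj : rel T) (N k lam : nat) : Prop :=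
  [/\ (exists x y, adj x y),
      #|T| = N,
      (forall x, #|[set y | adj x y]| = k) &
      (forall x y, adj x y -> #|[set z | adj x z && adj y z]| = lam)].

Definition is_clique (T : finType) (adj : rel T) (C : {set T}) : Prop :=
  forall x y, x \in C -> y \in C -> x != y -> adj x y.

Definition regular_clique (T : finType) (adj : rel T) (C : {set T}) : Prop :=
  is_clique adj C /\
  exists2 e : nat, (0 < e)%N &
    forall v, v \notin C -> #|[set w in C | adj v w]| = e.

(* Main.v *)
Require Import Defs.
From mathcomp Require Import all_boot all_order all_algebra all_field.
From mathcomp Require Import boolp zify ring.
Set Implicit Arguments. Unset Strict Implicit. Unset Printing Implicit Defensive.
Import Order.TTheory GRing.Theory Num.Theory.
Local Open Scope ring_scope.

Lemma card_bij (T1 T2 : finType) (A : {pred T1}) (B : {pred T2}) (g : T1 -> T2) (h : T2 -> T1) :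
  {in A, forall x, g x \in B} -> {in B, forall y, h y \in A} ->
  {in A, cancel g h} -> {in B, cancel h g} -> #|A| = #|B|.
Proof.
move=> gAB hBA gK hK. apply/eqP; rewrite eqn_leq; apply/andP; split.
  rewrite -(@card_in_imset _ _ g A); last first.
    by move=> x y xA yA e; rewrite -(gK x xA) -(gK y yA) e.
  apply: subset_leq_card. apply/subsetP => _ /imsetP [x xA ->]. exact: gAB.
rewrite -(@card_in_imset _ _ h B); last first.
  by move=> x y xA yA e; rewrite -(hK x xA) -(hK y yA) e.
apply: subset_leq_card. apply/subsetP => _ /imsetP [x xA ->]. exact: hBA.
Qed.



Lemma subZlE n (a b : 'I_n.+1) : subZl a b = (b - a)%R :> nat.
Proof. by rewrite /subZl /= modnDmr. Qed.
Lemma ord0E n (a : 'I_n.+1) : ((a : nat) == 0%N) = (a == ord0).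
Proof. by []. Qed.
Lemma valsub0 n (a b : 'I_n.+1) : (((a - b)%R : 'I_n.+1) == 0%N :> nat) = (a == b).
Proof. by rewrite ord0E -[ord0]/(0 : 'I_n.+1)%R subr_eq0. Qed.
Lemma card_Z23 : #|{: Z23}| = 8%N.
Proof. by rewrite !card_prod card_bool. Qed.
Lemma add3C x y : add3 x y = add3 y x.
Proof. by case: x y => [[[] []] []] [[[] []] []]. Qed.
Lemma add3A x y z : add3 x (add3 y z) = add3 (add3 x y) z.
Proof. by case: x y z => [[[] []] []] [[[] []] []] [[[] []] []]. Qed.
Lemma add3K x y : add3 x (add3 x y) = y.
Proof. by case: x y => [[[] []] []] [[[] []] []]. Qed.
Lemma add3_eq0 x y : (add3 x y == z0) = (x == y).
Proof. by case: x y => [[[] []] []] [[[] []] []]. Qed.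
Lemma add3_id x y : add3 x y = y -> x = z0.
Proof. by case: x y => [[[] []] []] [[[] []] []]. Qed.
Lemma add3_id' x y : add3 x y = x -> y = z0.
Proof. by case: x y => [[[] []] []] [[[] []] []]. Qed.

Lemma card_pair_sum (T1 T2 : finType) (P : T1 -> T2 -> bool) :
  #|[set p : T1 * T2 | P p.1 p.2]| = \sum_(x : T1) #|[set y | P x y]|.
Proof.
rewrite -sum1_card (eq_bigl (fun p : T1 * T2 => true && P p.1 p.2)); last by move=> p; rewrite inE.
rewrite -(pair_big_dep xpredT P (fun _ _ => 1%N)). apply: eq_bigr => x _.
by rewrite -sum1_card; apply: eq_bigl => y; rewrite inE.
Qed.

Section FieldPart.
Variable F : finFieldType.
Variable rho : F.
Hypothesis Hq : (#|F| %% 14 = 1)%N.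
Hypothesis Hprim : (#|F|.-1).-primitive_root rho.

Definition q1 := (#|F|.-1).
Definition rr := (q1 %/ 14)%N.

Lemma q1E : q1 = (14 * rr)%N.
Proof.
rewrite /rr /q1.
have h2 := finNzRing_gt1 F.
have := divn_eq #|F| 14; rewrite Hq => e.
rewrite {1}e. case: #|F| e h2 => [|m] //= e _. rewrite addn1 /=.
lia.
Qed.

Lemma rr_gt0 : (0 < rr)%N.
Proof.
have h2 := finNzRing_gt1 F.
have := q1E; rewrite /q1 -subn1. move: h2. have := divn_eq #|F| 14; rewrite Hq.
move: rr #|F| => x m. lia.
Qed.

Lemma q1_gt0 : (0 < q1)%N.
Proof. rewrite q1E; have := rr_gt0; lia. Qed.

Lemma rho_neq0 : rho != 0.
Proof.
apply/negP => /eqP r0. have := prim_expr_order Hprim. rewrite r0 expr0n.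
have := q1_gt0. rewrite /q1. case: (#|F|.-1) => //= m _ /eqP. by rewrite eq_sym oner_eq0.
Qed.

Lemma rho_q1 : rho ^+ q1 = 1.
Proof. exact: prim_expr_order Hprim. Qed.

Definition ind (f : F) : nat := odflt 0%N (omap val [pick k : 'I_q1 | f == rho ^+ k]).

Lemma indP f : f != 0 -> rho ^+ ind f = f.
Proof.
move=> f0.
have h : f ^+ q1 = 1.
  have e := expf_card f. rewrite /q1. move: e.
  case: #|F| => [|m] //= e.
  apply: (mulfI f0). by rewrite -exprS e mulr1.
have [i hi] := prim_rootP Hprim h.
rewrite /ind. case: pickP => [k /eqP -> //|/(_ i)]. by rewrite hi eqxx.
Qed.

Lemma ind_lt f : (ind f < q1)%N.
Proof. rewrite /ind. case: pickP => [k _ /=|_ /=]; [exact: ltn_ord | exact: q1_gt0]. Qed.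

Lemma exp_mod7 a b : rho ^+ a = rho ^+ b -> (a %% 7 = b %% 7)%N.
Proof.
move/eqP. rewrite (eq_prim_root_expr Hprim) -/q1 q1E => /eqP e.
have : ((a %% (14 * rr)) %% 7 = (b %% (14 * rr)) %% 7)%N by rewrite e.
by rewrite !modn_dvdm // dvdn_mulr.
Qed.

Lemma rhoX_neq0 k : rho ^+ k != 0.
Proof. by rewrite expf_neq0 // rho_neq0. Qed.

Lemma ind_exp k : (ind (rho ^+ k) %% 7 = k %% 7)%N.
Proof. apply: exp_mod7. by rewrite indP // rhoX_neq0. Qed.

Definition cl (i : nat) (f : F) : bool := (f != 0) && (ind f %% 7 == i %% 7)%N.

Lemma cl_mod i j f : (i %% 7 = j %% 7)%N -> cl i f = cl j f.
Proof. by rewrite /cl => ->. Qed.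

Lemma clX i k : (k %% 7 = i %% 7)%N -> cl i (rho ^+ k).
Proof. by move=> h; rewrite /cl rhoX_neq0 ind_exp h eqxx. Qed.

Lemma cl_ex i f : cl i f -> exists k, f = rho ^+ k /\ (k %% 7 = i %% 7)%N.
Proof. case/andP => f0 /eqP h. exists (ind f). by rewrite indP. Qed.

Lemma cl_neq0 i f : cl i f -> f != 0.
Proof. by case/andP. Qed.

Lemma cl_uniq i j f : cl i f -> cl j f -> (i %% 7 = j %% 7)%N.
Proof. by case/andP => _ /eqP <- /andP [_ /eqP <-]. Qed.

Lemma clM i j f g : cl i f -> cl j g -> cl (i + j) (f * g).
Proof.
move=> /cl_ex [a [-> ha]] /cl_ex [b [-> hb]].
rewrite -exprD; apply: clX. rewrite -modnDm ha hb modnDm. done.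
Qed.

Lemma clV i f : cl i f -> cl (6 * i) f^-1.
Proof.
move=> /cl_ex [a [-> ha]].
have e : (rho ^+ a)^-1 = rho ^+ (a * (q1 - 1)).
  apply: (@mulIf _ (rho ^+ a)); first by rewrite rhoX_neq0.
  rewrite mulVf ?rhoX_neq0 // -exprD mulnBr muln1 subnK ?leq_pmulr ?q1_gt0 //.
  by rewrite mulnC exprM rho_q1 expr1n.
rewrite e; apply: clX. move: ha. rewrite q1E.
have := rr_gt0. move=> h1 h2.
have -> : (a * (14 * rr - 1) = 7 * (a * (2 * rr)) - a)%N.
  rewrite mulnBr muln1 mulnCA. congr (_ - _)%N. lia.
have : (a <= a * (2 * rr))%N by rewrite leq_pmulr // muln_gt0.
move: (a * (2 * rr))%N => t. lia.
Qed.

Lemma cl_m1 : cl 0 (-1).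
Proof.
have e : rho ^+ (7 * rr) = -1.
  have h : (rho ^+ (7 * rr) - 1) * (rho ^+ (7 * rr) + 1) = 0.
    rewrite mulrDr mulr1 mulrBl mul1r -exprD.
    have -> : (7 * rr + 7 * rr = q1)%N by rewrite q1E; lia.
    by rewrite rho_q1 addrA subrK subrr.
  move/eqP: h; rewrite mulf_eq0 => /orP [|].
    rewrite subr_eq0 -(expr0 rho) (eq_prim_root_expr Hprim) -/q1 mod0n q1E => /eqP.
    have h0 := rr_gt0; rewrite modn_small; lia.
  by rewrite addr_eq0 => /eqP.
rewrite -e; apply: clX. lia.
Qed.

Lemma clN i f : cl i f -> cl i (- f).
Proof.
move=> h. rewrite -mulN1r. have := clM cl_m1 h. by rewrite add0n.
Qed.

Lemma inC_cl (i : nat) (f : F) : (i < 7)%N ->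
  `[< exists j : int, (j %% 7)%Z = i%:Z /\ f = rho ^ j >] = cl i f.
Proof.
move=> hi. apply/asboolP/idP.
  case=> j [hj ->].
  have q0 : (q1%:Z != 0) by rewrite eqz_nat -lt0n q1_gt0.
  set k := `|(j %% q1%:Z)%Z|%N.
  have hk : (j %% q1%:Z)%Z = k%:Z by rewrite /k gez0_abs // modz_ge0.
  have ej : j = ((j %/ q1%:Z)%Z * (2 * rr)%N%:Z) * 7 + k%:Z.
    rewrite -hk {1}(divz_eq j q1%:Z). move: (j %/ q1%:Z)%Z (j %% q1%:Z)%Z => d e.
    rewrite q1E. lia.
  have -> : rho ^ j = rho ^+ k.
    rewrite {1}(divz_eq j q1%:Z) expfzDr ?rho_neq0 // hk (mulrC (j %/ _)%Z) -exprz_exp.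
    change (rho ^ q1%:Z) with (rho ^+ q1). by rewrite rho_q1 exp1rz mul1r.
  apply: clX. move: hj; rewrite ej modzMDl modz_nat => [[->]].
  by rewrite modn_small.
move=> /cl_ex [k [-> hk]]. exists k%:Z. split => //.
by rewrite modz_nat hk modn_small.
Qed.

Lemma cclassE i f : (f \in cclass rho i) = cl i f.
Proof.
apply/imsetP/idP.
  case=> j _ ->. apply: clX. lia.
move=> h. have a0 := cl_neq0 h. case/andP: h => _ /eqP ha.
set a := ind f in ha.
have hr := rr_gt0.
set M := (a %/ 7 + 2 * rr * i - i %/ 7)%N.
have hM : (7 * M + i = a + 14 * rr * i)%N.
  rewrite /M. have := divn_eq a 7; have := divn_eq i 7. 
  have : (i %/ 7 <= i)%N by apply: leq_div.
  have : (i <= 2 * rr * i)%N by rewrite leq_pmull // muln_gt0 hr.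
  lia.
have hq : (2 * (#|F|.-1 %/ 14) = 2 * rr)%N by [].
have kl : (M %% (2 * rr) < 2 * (#|F|.-1 %/ 14))%N by rewrite hq ltn_pmod // muln_gt0.
exists (Ordinal kl) => //=.
rewrite -(indP a0) -/a. apply/eqP. rewrite (eq_prim_root_expr Hprim) -/q1 q1E.
apply/eqP.
have e3 : (7 * (M %% (2 * rr)) + i + (14 * rr) * (M %/ (2 * rr)) = a + (14 * rr) * i)%N.
  rewrite -hM [in RHS](divn_eq M (2 * rr)). move: (M %/ (2 * rr))%N (M %% (2 * rr))%N => Q R.
  ring.
rewrite -(modnMDl (M %/ (2 * rr)) (7 * (M %% (2 * rr)) + i)) -(modnMDl i a).
congr (_ %% _)%N. rewrite mulnC addnC -e3. ring.
Qed.

Definition cyc (a b : nat) := #|[set x : F | cl a (x - 1) && cl b x]|.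

Lemma cycnumE a b : cycnum rho a b = cyc a b.
Proof.
rewrite /cycnum /cyc. apply: eq_card => x. by rewrite !inE !cclassE.
Qed.

Lemma cyc_mod a b a' b' : (a %% 7 = a' %% 7)%N -> (b %% 7 = b' %% 7)%N -> cyc a b = cyc a' b'.
Proof.
move=> ha hb. rewrite /cyc.
apply: eq_card => x. by rewrite !inE (cl_mod _ ha) (cl_mod _ hb).
Qed.


Lemma cyc_swap a b : cyc a b = cyc b a.
Proof.
rewrite /cyc. apply: (@card_bij _ _ _ _ (fun x => 1 - x) (fun x => 1 - x)).
- move=> x; rewrite !inE => /andP [h1 h2].
  have -> : 1 - x - 1 = - x by rewrite addrAC subrr add0r.
  rewrite clN //=. have -> : 1 - x = - (x - 1) by rewrite opprB.
  by rewrite clN.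
- move=> x; rewrite !inE => /andP [h1 h2].
  have -> : 1 - x - 1 = - x by rewrite addrAC subrr add0r.
  rewrite clN //=. have -> : 1 - x = - (x - 1) by rewrite opprB.
  by rewrite clN.
- by move=> x _; rewrite opprB addrC subrK.
- by move=> x _; rewrite opprB addrC subrK.
Qed.

Lemma cyc_neg a b : cyc a b = cyc (6 * a) (b + 6 * a).
Proof.
rewrite /cyc.
have gm : forall x : F, x - 1 != 0 -> x / (x - 1) - 1 = (x - 1)^-1.
  by move=> x h; field.
have gg : forall x : F, x - 1 != 0 -> (x / (x - 1)) / (x / (x - 1) - 1) = x.
  by move=> x h; rewrite gm // invrK; field.
refine (@card_bij F F _ _ (fun x => x / (x - 1)) (fun x => x / (x - 1)) _ _ _ _).
- move=> x; rewrite !inE => /andP [h1 h2].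
  rewrite gm ?(cl_neq0 h1) //. apply/andP; split; [exact: clV | exact: clM h2 (clV h1)].
- move=> x; rewrite !inE => /andP [h1 h2].
  rewrite gm ?(cl_neq0 h1) //. apply/andP; split.
    rewrite (@cl_mod _ (6 * (6 * a))); first exact: clV. lia.
  rewrite (@cl_mod _ (b + 6 * a + 6 * (6 * a))); first by apply: clM => //; apply: clV.
  lia.
- move=> x; rewrite inE => /andP [h1 _]. by rewrite gg ?(cl_neq0 h1).
- move=> x; rewrite inE => /andP [h1 _]. by rewrite gg ?(cl_neq0 h1).
Qed.

Lemma orbit15 a b : ((a %% 7, b %% 7) \in [:: (1,5); (5,1); (6,4); (4,6); (2,3); (3,2)])%N ->
  cyc a b = cyc 1 5.
Proof.
rewrite (@cyc_mod a b (a %% 7) (b %% 7)) ?modn_mod //.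
move: (a %% 7)%N (b %% 7)%N => x y.
rewrite !inE => /orP [/eqP [-> ->] //|/orP [/eqP [-> ->]|/orP [/eqP [-> ->]|/orP [/eqP [-> ->]|/orP [/eqP [-> ->]|/eqP [-> ->]]]]]].
- by rewrite cyc_swap.
- by rewrite cyc_neg; apply: cyc_mod.
- by rewrite cyc_swap cyc_neg; apply: cyc_mod.
- by rewrite cyc_neg cyc_swap; apply: cyc_mod.
- by rewrite cyc_swap cyc_neg cyc_swap; apply: cyc_mod.
Qed.

Lemma orbit13 a b : ((a %% 7, b %% 7) \in [:: (1,3); (3,1); (6,2); (2,6); (4,5); (5,4)])%N ->
  cyc a b = cyc 1 3.
Proof.
rewrite (@cyc_mod a b (a %% 7) (b %% 7)) ?modn_mod //.
move: (a %% 7)%N (b %% 7)%N => x y.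
rewrite !inE => /orP [/eqP [-> ->] //|/orP [/eqP [-> ->]|/orP [/eqP [-> ->]|/orP [/eqP [-> ->]|/orP [/eqP [-> ->]|/eqP [-> ->]]]]]].
- by rewrite cyc_swap.
- by rewrite cyc_neg; apply: cyc_mod.
- by rewrite cyc_swap cyc_neg; apply: cyc_mod.
- by rewrite cyc_neg cyc_swap; apply: cyc_mod.
- by rewrite cyc_swap cyc_neg cyc_swap; apply: cyc_mod.
Qed.


Variable n : nat.
Variable pi : Z23 -> nat.
Hypothesis Hlt : forall z, (pi z < 7)%N.
Hypothesis Hinj : forall z w, z != z0 -> w != z0 -> pi z = pi w -> z = w.
Hypothesis Hsurj : forall i, (i < 7)%N -> exists2 w, w != z0 & pi w = i.
Variable m : nat.
Hypothesis Hcyc : forall z w, z != z0 -> w != z0 -> w != z ->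
  cyc (pi (add3 z w) + 7 - pi z) (pi w + 7 - pi z) = m.

Notation V := (vtx n.+1 F).
Notation adj := (@cay_adj n.+1 F rho pi).

Definition inSd (d : V) := inS rho pi d.1.1 d.1.2 d.2.

Lemma inSdE (a : 'I_n.+1) w f : inSd ((a, w), f) =
  ((f == 0) && ((a != ord0) || (w != z0))) || [&& a == ord0, w != z0 & cl (pi w) f].
Proof. by rewrite /inSd /inS /= inC_cl // ord0E negb_and. Qed.

Definition vadd (x d : V) : V := ((x.1.1 + d.1.1, add3 x.1.2 d.1.2), x.2 + d.2).
Definition vsub (y x : V) : V := ((y.1.1 - x.1.1, add3 x.1.2 y.1.2), y.2 - x.2).

Lemma adjE x y : adj x y = inSd (vsub y x).
Proof. by rewrite /cay_adj /inSd /= subZlE. Qed.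

Lemma vsubK x d : vsub (vadd x d) x = d.
Proof.
case: x d => [[a w] f] [[b u] g]. rewrite /vsub /vadd /= add3K.
by rewrite (addrC a) addrK (addrC f) addrK.
Qed.

Lemma vaddK x y : vadd x (vsub y x) = y.
Proof.
case: x y => [[a w] f] [[b u] g]. by rewrite /vsub /vadd /= add3K !subrKC.
Qed.

Lemma vsub_vadd x y u : vsub (vadd x u) y = vsub u (vsub y x).
Proof.
case: x y u => [[a w] f] [[b v] g] [[c u] h]. rewrite /vsub /vadd /=.
congr ((_, _), _).
- by rewrite opprB addrA (addrC c).
- by rewrite add3A (add3C v w).
- by rewrite opprB addrA (addrC h).
Qed.

Definition zeta (f : F) : Z23 := odflt z0 [pick w | (w != z0) && (pi w == ind f %% 7)%N].

Lemma zetaP f : zeta f != z0 /\ pi (zeta f) = (ind f %% 7)%N.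
Proof.
rewrite /zeta. case: pickP => [w /andP [h1 /eqP h2] //|].
have [w h1 h2] := Hsurj (ltn_pmod (ind f) (isT : (0 < 7)%N)).
by move/(_ w); rewrite h1 h2 eqxx.
Qed.

Lemma zeta_cl f : f != 0 -> cl (pi (zeta f)) f.
Proof. move=> f0. case: (zetaP f) => _ e. by rewrite /cl f0 e modn_mod eqxx. Qed.

Lemma pi_uniq w w' f : w != z0 -> w' != z0 -> cl (pi w) f -> cl (pi w') f -> w = w'.
Proof.
move=> h1 h2 c1 c2. apply: Hinj => //.
have := cl_uniq c1 c2. by rewrite !modn_small.
Qed.

Lemma zeta_uniq w f : w != z0 -> cl (pi w) f -> w = zeta f.
Proof.
move=> h c. have f0 := cl_neq0 c. case: (zetaP f) => h' _.
exact: pi_uniq h h' c (zeta_cl f0).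
Qed.

Lemma deg_count : #|[set d : V | inSd d]| = (8 * n.+1 - 2 + #|F|)%N.
Proof.
rewrite -(cardsID [set d : V | d.2 == 0]).
have -> : #|[set d : V | inSd d] :&: [set d : V | d.2 == 0]| = #|[set g : 'I_n.+1 * Z23 | g != (ord0, z0)]|.
  apply: (@card_bij _ _ _ _ (fun d : V => d.1) (fun g => (g, 0))).
  - move=> [[a w] f]; rewrite !inE inSdE /= => /andP [+ /eqP f0].
    rewrite f0 eqxx /= => /orP [h|/and3P [_ _ /cl_neq0]]; last by rewrite eqxx.
    by rewrite xpair_eqE negb_and.
  - move=> [a w]; rewrite !inE inSdE eqxx /= xpair_eqE negb_and => ->. by [].
  - by move=> [[a w] f]; rewrite !inE => /andP [_ /eqP /= ->].
  - by [].
have -> : #|[set d : V | inSd d] :\: [set d : V | d.2 == 0]| = #|[set f : F | f != 0]|.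
  apply: (@card_bij _ _ _ _ (fun d : V => d.2) (fun f => ((ord0, zeta f), f))).
  - by move=> [[a w] f]; rewrite !inE /= => /andP [].
  - move=> f; rewrite !inE /= => f0. rewrite f0 inSdE (negbTE f0) /=.
    by case: (zetaP f) => -> _; rewrite zeta_cl.
  - move=> [[a w] f]; rewrite !inE /= => /andP [f0]. rewrite inSdE (negbTE f0) /=.
    by case/and3P => /eqP -> h c; rewrite -(zeta_uniq h c).
  - by [].
have e1 : #|[set g : 'I_n.+1 * Z23 | g != (ord0, z0)]| = #|[set~ (@ord0 n, z0)]|.
  by apply: eq_card => g; rewrite !inE.
have e2 : #|[set f : F | f != 0]| = #|[set~ (0 : F)]|.
  by apply: eq_card => g; rewrite !inE.
rewrite e1 e2 !cardsC1 card_prod card_ord card_Z23.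
have := finNzRing_gt1 F. move: #|F| => N. lia.
Qed.


Lemma cl0 i : cl i 0 = false.
Proof. by rewrite /cl eqxx. Qed.

Lemma sub_ord0 (a b : 'I_n.+1) : (a - b == ord0) = (a == b).
Proof. by rewrite -[ord0]/(0 : 'I_n.+1)%R subr_eq0. Qed.

Lemma pneq (a b : 'I_n.+1) (w v : Z23) : ((a, w) != (b, v)) = (a != b) || (w != v).
Proof. by rewrite xpair_eqE negb_and. Qed.

Lemma lam0 (s : V) : inSd s -> s.2 = 0 ->
  #|[set u : V | inSd u && inSd (vsub u s)]| = (8 * n.+1 - 2)%N.
Proof.
case: s => [[a0 w0] t] /=; rewrite inSdE => + t0; rewrite t0 eqxx cl0 !andbF !orbF /= => hs.
have -> : #|[set u : V | inSd u && inSd (vsub u ((a0, w0), 0))]| =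
  #|[set g : 'I_n.+1 * Z23 | (g != (ord0, z0)) && (g != (a0, w0))]|.
  apply: (@card_bij _ _ _ _ (fun d : V => d.1) (fun g => (g, 0))).
  - move=> [[a w] f]; rewrite !inE /vsub /= !inSdE subr0.
    have [->|f0] := eqVneq f 0.
      rewrite !cl0 !andbF !orbF /= => /andP [h1 h2].
      rewrite !pneq h1 /=. by rewrite sub_ord0 add3_eq0 (eq_sym w0) in h2.
    rewrite /= => /andP [/and3P [/eqP ha hw c1] /and3P [ha' hw' c2]].
    have e := pi_uniq hw hw' c1 c2.
    move: ha'; rewrite sub_ord0 ha => /eqP ea0.
    have := add3_id (esym e). move=> ew0. by move: hs; rewrite -ea0 ew0 eqxx.
  - move=> [a w]; rewrite !inE /vsub /= !inSdE subr0 eqxx /= => /andP [h1 h2].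
    move: h1 h2; rewrite !pneq sub_ord0 add3_eq0 => -> /=.
    by rewrite (eq_sym w0) => ->.
  - move=> [[a w] f]; rewrite !inE /vsub /= !inSdE subr0 => /andP [].
    have [->//|f0] := eqVneq f 0.
    rewrite /= => /and3P [/eqP ha hw c1] /and3P [ha' hw' c2].
    have e := pi_uniq hw hw' c1 c2.
    move: ha'; rewrite sub_ord0 ha => /eqP ea0.
    have := add3_id (esym e). move=> ew0. by move: hs; rewrite -ea0 ew0 eqxx.
  - by [].
have e1 : #|[set g : 'I_n.+1 * Z23 | (g != (ord0, z0)) && (g != (a0, w0))]| =
   #|[set~ (@ord0 n, z0)] :\ (a0, w0)|.
  apply: eq_card => g. by rewrite !inE andbC.
have e2 := cardsD1 (a0, w0) [set~ (@ord0 n, z0)].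
rewrite cardsC1 card_prod card_ord card_Z23 !inE pneq hs /= in e2.
rewrite e1. move: e2. move: #|_| => N. lia.
Qed.


Lemma inner_count w0 t w : w0 != z0 -> cl (pi w0) t -> w != z0 -> w != w0 ->
  #|[set f : F | cl (pi w) f && cl (pi (add3 w0 w)) (f - t)]| = m.
Proof.
move=> hw0 ct hw hww. have t0 := cl_neq0 ct.
rewrite -(Hcyc hw0 hw hww) /cyc.
have hl0 := Hlt w0.
apply: (@card_bij _ _ _ _ (fun f => f / t) (fun x => t * x)).
- move=> f; rewrite !inE => /andP [c1 c2]. apply/andP; split.
    have -> : f / t - 1 = (f - t) * t^-1 by field.
    rewrite (@cl_mod _ (pi (add3 w0 w) + 6 * pi w0)); first exact: clM c2 (clV ct).
    lia.
  rewrite (@cl_mod _ (pi w + 6 * pi w0)); first exact: clM c1 (clV ct).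
  lia.
- move=> x; rewrite !inE => /andP [c1 c2]. apply/andP; split.
    rewrite (@cl_mod _ (pi w0 + (pi w + 7 - pi w0))); first exact: clM ct c2.
    lia.
  have -> : t * x - t = t * (x - 1) by rewrite mulrBr mulr1.
  rewrite (@cl_mod _ (pi w0 + (pi (add3 w0 w) + 7 - pi w0))); first exact: clM ct c1.
  lia.
- by move=> f _ /=; field.
- by move=> x _ /=; field.
Qed.

Lemma lam1 (s : V) : inSd s -> s.2 != 0 ->
  #|[set u : V | inSd u && inSd (vsub u s)]| = (6 * m)%N.
Proof.
case: s => [[a0 w0] t] /=; rewrite inSdE => + t0; rewrite (negbTE t0) /=.
case/and3P => /eqP -> hw0 ct.
have -> : #|[set u : V | inSd u && inSd (vsub u ((ord0, w0), t))]| =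
  #|[set p : Z23 * F | [&& p.1 != z0, p.1 != w0, cl (pi p.1) p.2 & cl (pi (add3 w0 p.1)) (p.2 - t)]]|.
  apply: (@card_bij _ _ _ _ (fun d : V => (d.1.2, d.2)) (fun p => ((ord0, p.1), p.2))).
  - move=> [[a w] f]; rewrite !inE /vsub /= !inSdE.
    have [->|f0] := eqVneq f 0.
      rewrite cl0 !andbF !orbF /= add0r oppr_eq0 (negbTE t0) /= => /andP [h1].
      case/and3P => ha hw c2; move: ha; rewrite sub_ord0 => /eqP ea.
      have e := pi_uniq hw hw0 c2 (clN ct).
      by move: h1; rewrite ea (add3_id' e) eqxx.
    rewrite /= => /andP [/and3P [/eqP ha hw c1]].
    have [ft|ft] := eqVneq (f - t) 0.
      move: ft => /eqP; rewrite subr_eq0 => /eqP ft; move: c1; rewrite ft => c1.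
      have e := pi_uniq hw hw0 c1 ct.
      by rewrite !sub_ord0 ha e add3_eq0 !eqxx /= !andbF.
    rewrite /= => /and3P [_ hw' c2].
    rewrite hw c1 c2 /= andbT. by rewrite add3_eq0 eq_sym in hw'.
  - move=> [w f]; rewrite !inE /= => /and4P [hw hww c1 c2].
    rewrite /vsub /= !inSdE !sub_ord0 !eqxx hw c1 add3_eq0 (eq_sym w0) hww c2 /=.
    by rewrite !orbT.
  - move=> [[a w] f]; rewrite !inE /vsub /= !inSdE => /andP [].
    have [->|f0] := eqVneq f 0.
      rewrite cl0 !andbF !orbF /= add0r oppr_eq0 (negbTE t0) /= => h1.
      case/and3P => ha hw c2; move: ha; rewrite sub_ord0 => /eqP ea.
      have e := pi_uniq hw hw0 c2 (clN ct).
      by move: h1; rewrite ea (add3_id' e) eqxx.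
    by rewrite /= => /and3P [/eqP -> _ _].
  - by move=> [w f].
rewrite (card_pair_sum (fun w f => [&& w != z0, w != w0, cl (pi w) f & cl (pi (add3 w0 w)) (f - t)])).
rewrite (eq_bigr (fun w => if w \in [set w | (w != z0) && (w != w0)] then m else 0%N)); last first.
  move=> w _; rewrite inE.
  case: ifP => [/andP [hw hww]|hc].
    rewrite -(inner_count hw0 ct hw hww). apply: eq_card => f.
    by rewrite !inE hw hww.
  apply: eq_card0 => f. rewrite !inE. case: (w != z0) hc => //=. by case: (w != w0).
rewrite -big_mkcond /= sum_nat_const.
have e1 : #|[set w | (w != z0) && (w != w0)]| = #|[set~ z0] :\ w0|.
  apply: eq_card => g. by rewrite !inE andbC.
have e2 := cardsD1 w0 [set~ z0].
rewrite cardsC1 card_Z23 !inE hw0 /= in e2.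
rewrite e1. move: e2. move: #|_| => N. lia.
Qed.


Lemma graph_main : (6 * m = 8 * n.+1 - 2)%N ->
  edge_regular adj (8 * n.+1 * #|F|) (8 * n.+1 - 2 + #|F|) (8 * n.+1 - 2)
  /\ exists C : {set V}, #|C| = (8 * n.+1)%N /\ regular_clique adj C.
Proof.
move=> H6. split.
  split.
  - exists ((ord0, z0), 0), ((ord0, (true, true, true)), 0).
    rewrite adjE /vsub /= inSdE; apply/orP; left; apply/andP; split.
      by rewrite subr0.
    by apply/orP; right.
  - rewrite !card_prod card_ord card_bool. by rewrite (mulnC n.+1).
  - move=> x. rewrite -deg_count.
    apply: (@card_bij _ _ _ _ (fun y => vsub y x) (fun d => vadd x d)).
    + by move=> y; rewrite !inE adjE.
    + by move=> d; rewrite !inE adjE vsubK.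
    + by move=> y _; rewrite vaddK.
    + by move=> d _; rewrite vsubK.
  - move=> x y hxy. set s := vsub y x.
    have hs : inSd s by rewrite -adjE.
    have -> : #|[set z | adj x z && adj y z]| = #|[set u : V | inSd u && inSd (vsub u s)]|.
      apply: (@card_bij _ _ _ _ (fun z => vsub z x) (fun d => vadd x d)).
      + by move=> z; rewrite !inE !adjE -vsub_vadd vaddK.
      + by move=> d; rewrite !inE !adjE vsubK vsub_vadd.
      + by move=> z _; rewrite vaddK.
      + by move=> d _; rewrite vsubK.
    have [e|e] := eqVneq s.2 0; first exact: lam0.
    by rewrite lam1 // H6.
exists [set v : V | v.2 == 0]. split.
  have -> : #|[set v : V | v.2 == 0]| = #|[set: 'I_n.+1 * Z23]|.
    apply: (@card_bij _ _ _ _ (fun v : V => v.1) (fun g => (g, 0))).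
    + by move=> v; rewrite !inE.
    + by move=> g; rewrite !inE.
    + by move=> [g f]; rewrite inE /= => /eqP ->.
    + by [].
  by rewrite cardsT card_prod card_ord card_Z23 mulnC.
split.
  move=> [[a w] f] [[b v] g]; rewrite !inE /= => /eqP -> /eqP ->.
  rewrite adjE /vsub /= inSdE subrr eqxx /= sub_ord0 add3_eq0.
  rewrite !xpair_eqE !eqxx !andbT negb_and => /orP [h|h].
    by rewrite eq_sym h.
  by rewrite h orbT.
exists 1%N => //.
move=> [[a w] f]; rewrite inE /= => f0.
set w1 : V := ((a, add3 w (zeta (- f))), 0).
have -> : [set x in [set v : V | v.2 == 0] | adj ((a, w), f) x] = [set w1].
  apply/setP => [[[b u] g]]; rewrite !inE adjE /vsub /= inSdE.
  have nf : - f != 0 by rewrite oppr_eq0.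
  have [->|g0] := eqVneq g 0; last first.
    rewrite /w1 /=; symmetry; apply/eqP => [[_ _ e]]; by rewrite e eqxx in g0.
  rewrite add0r (negbTE nf) /= sub_ord0.
  apply/and3P/eqP.
    case=> /eqP -> hz c. by rewrite /w1 -(zeta_uniq hz c) add3K.
  rewrite /w1 => [[-> ->]]. rewrite add3K eqxx. case: (zetaP (- f)) => -> _.
  by rewrite zeta_cl.
by rewrite cards1.
Qed.

End FieldPart.

Lemma psi1_lt z : (Psi1 z < 7)%N.
Proof. by case: z => [[[] []] []]. Qed.
Lemma psi2_lt z : (Psi2 z < 7)%N.
Proof. by case: z => [[[] []] []]. Qed.
Lemma psi1_inj z w : z != z0 -> w != z0 -> Psi1 z = Psi1 w -> z = w.
Proof. by case: z w => [[[] []] []] [[[] []] []]. Qed.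
Lemma psi2_inj z w : z != z0 -> w != z0 -> Psi2 z = Psi2 w -> z = w.
Proof. by case: z w => [[[] []] []] [[[] []] []]. Qed.
Lemma psi1_surj i : (i < 7)%N -> exists2 w, w != z0 & Psi1 w = i.
Proof.
case: i => [|[|[|[|[|[|[|i]]]]]]] // _.
- by exists (true, true, true).
- by exists (true, false, false).
- by exists (false, false, true).
- by exists (true, true, false).
- by exists (false, true, false).
- by exists (false, true, true).
- by exists (true, false, true).
Qed.
Lemma psi2_surj i : (i < 7)%N -> exists2 w, w != z0 & Psi2 w = i.
Proof.
case: i => [|[|[|[|[|[|[|i]]]]]]] // _.
- by exists (true, true, true).
- by exists (true, true, false).
- by exists (true, false, true).
- by exists (false, false, true).
- by exists (false, true, true).
- by exists (true, false, false).
- by exists (false, true, false).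
Qed.

Unset Implicit Arguments.
Set Strict Implicit.

Theorem theorem3p3 (F : finFieldType) (rho : F) (c : nat) :
  (#|F| %% 14 = 1)%N ->
  (#|F|.-1).-primitive_root rho ->
  (0 < c)%N -> (c %% 4 = 1)%N ->
  let l := ((3 * c + 1) %/ 4)%N in
  (c = cycnum rho 1 5 ->
     edge_regular (@cay_adj l F rho Psi1) (8 * l * #|F|) (8 * l - 2 + #|F|) (8 * l - 2)
     /\ exists C : {set vtx l F}, #|C| = (8 * l)%N /\ regular_clique (@cay_adj l F rho Psi1) C)
  /\
  (c = cycnum rho 1 3 ->
     edge_regular (@cay_adj l F rho Psi2) (8 * l * #|F|) (8 * l - 2 + #|F|) (8 * l - 2)
     /\ exists C : {set vtx l F}, #|C| = (8 * l)%N /\ regular_clique (@cay_adj l F rho Psi2) C).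
Proof.
move=> Hq Hprim c0 c4 l.
have H6 : (6 * c = 8 * l - 2)%N by rewrite /l; lia.
have hl : (0 < l)%N by rewrite /l; lia.
clearbody l. case: l H6 hl => [//|n] H6 _.
split => hc.
  apply: (@graph_main F rho Hq Hprim n Psi1 _ _ _ c) => //.
  - exact: psi1_lt.
  - exact: psi1_inj.
  - exact: psi1_surj.
  - rewrite hc (cycnumE Hq Hprim) => z w hz hw hwz. apply: (orbit15 Hq Hprim).
    by move: z w hz hw hwz => [[[] []] []] [[[] []] []].
apply: (@graph_main F rho Hq Hprim n Psi2 _ _ _ c) => //.
- exact: psi2_lt.
- exact: psi2_inj.
- exact: psi2_surj.
- rewrite hc (cycnumE Hq Hprim) => z w hz hw hwz. apply: (orbit13 Hq Hprim).
  by move: z w hz hw hwz => [[[] []] []] [[[] []] []].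
Qed.
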